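(* Let $d\ge2$ be even, $\epsilon>0$ and $B>0$. Then the mechanism $\mathcal{M}_{\alpha_0,B}$ with $\alpha_0=\frac{e^\epsilon}{e^\epsilon+1}$ does not satisfy $\epsilon$-local differential privacy on the input domain $[-1,1]^d$.
   Context: For $B>0$ and $v\in\{-1,1\}^d$ let $T^+(v)=\{y\in\{-B,B\}^d: y\cdot v>0\}$, $T^-(v)=\{y\in\{-B,B\}^d: y\cdot v\le 0\}$. For $\alpha\in[0,1]$, $\mathcal{M}_{\alpha,B}$ takes $x\in[-1,1]^d$, samples $V\in\{-1,1\}^d$ with independent coordinates $\mathbb{P}[V_j=\pm1]=\frac12\pm\frac12x_j$, independently samples $u\in\{0,1\}$ with $\mathbb{P}[u=1]=\alpha$, and outputs a uniformly random element of $T^+(V)$ if $u=1$ and of $T^-(V)$ if $u=0$. A mechanism $\mathcal{M}$ satisfies $\epsilon$-local differential privacy if for all inputs $x,x'$ and all sets $\mathcal{Y}$ of outputs, $\mathbb{P}[\mathcal{M}(x)\in\mathcal{Y}]\le e^\epsilon\mathbb{P}[\mathcal{M}(x')\in\mathcal{Y}]$. *)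

(* Defs.v *)
From mathcomp Require Import all_boot.
From Stdlib Require Import Reals.
Set Implicit Arguments. Unset Strict Implicit. Unset Printing Implicit Defensive.

(* Sign vectors in {-1,1}^d are encoded as boolean functions ('true' = +1). *)
Definition sgnvec (d : nat) := {ffun 'I_d -> bool}.

Definition vcoord (d : nat) (v : sgnvec d) (j : 'I_d) : R :=
  if v j then 1%R else (-1)%R.

(* Outputs y in {-B,B}^d are encoded as boolean functions s, with
   y_j = B if s j, and y_j = -B otherwise (a bijection since B > 0). *)
Definition ycoord (d : nat) (B : R) (s : sgnvec d) (j : 'I_d) : R :=
  if s j then B else (- B)%R.

Definition dotyv (d : nat) (B : R) (s v : sgnvec d) : R :=
  \big[Rplus/0%R]_(j < d) (ycoord B s j * vcoord v j)%R.

Definition inTplus (d : nat) (B : R) (v s : sgnvec d) : bool :=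
  if Rlt_dec 0%R (dotyv B s v) then true else false.

Definition Tplus (d : nat) (B : R) (v : sgnvec d) : {set sgnvec d} :=
  [set s | inTplus B v s].
Definition Tminus (d : nat) (B : R) (v : sgnvec d) : {set sgnvec d} :=
  [set s | ~~ inTplus B v s].

(* P[V = v] where the V_j are independent with P[V_j = +-1] = 1/2 +- x_j/2 *)
Definition probV (d : nat) (x : 'I_d -> R) (v : sgnvec d) : R :=
  \big[Rmult/1%R]_(j < d)
     (if v j then (1/2 + x j / 2)%R else (1/2 - x j / 2)%R).

(* P[M_{alpha,B}(x) = y]: with prob. alpha uniform on T^+(V), otherwise
   uniform on T^-(V). *)
Definition probM (d : nat) (alpha B : R) (x : 'I_d -> R) (s : sgnvec d) : R :=
  \big[Rplus/0%R]_(v : sgnvec d)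
    (probV x v *
      (alpha * (if s \in Tplus B v then / INR #|Tplus B v| else 0)
       + (1 - alpha) * (if s \in Tminus B v then / INR #|Tminus B v| else 0)))%R.

Definition probMset (d : nat) (alpha B : R) (x : 'I_d -> R) (Y : {set sgnvec d}) : R :=
  \big[Rplus/0%R]_(s in Y) probM alpha B x s.

Definition in_cube (d : nat) (x : 'I_d -> R) : Prop :=
  forall j, (-1 <= x j <= 1)%R.

Definition LDP (d : nat) (alpha B eps : R) : Prop :=
  forall x x' : 'I_d -> R, in_cube x -> in_cube x' ->
  forall Y : {set sgnvec d},
    (probMset alpha B x Y <= exp eps * probMset alpha B x' Y)%R.

(* Main.v *)
Require Import Defs.
From HB Require Import structures.
From mathcomp Require Import all_boot.
From Stdlib Require Import Reals Lra.

Lemma Rplus_0_l' : left_id 0%R Rplus. Proof. move=> x; lra. Qed.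
Lemma Rplus_assoc' : associative Rplus. Proof. move=> x y z; lra. Qed.
Lemma Rplus_comm' : commutative Rplus. Proof. move=> x y; lra. Qed.
HB.instance Definition _ := Monoid.isComLaw.Build R 0%R Rplus Rplus_assoc' Rplus_comm' Rplus_0_l'.
Lemma Rmult_1_l' : left_id 1%R Rmult. Proof. move=> x; lra. Qed.
Lemma Rmult_assoc' : associative Rmult. Proof. move=> x y z; ring. Qed.
Lemma Rmult_comm' : commutative Rmult. Proof. move=> x y; ring. Qed.
HB.instance Definition _ := Monoid.isComLaw.Build R 1%R Rmult Rmult_assoc' Rmult_comm' Rmult_1_l'.

Section S.
Variables (d : nat) (B : R).
Definition v1 : sgnvec d := [ffun _ : 'I_d => true].
Definition v2 : sgnvec d := [ffun _ : 'I_d => false].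

Lemma dot_v2 s : dotyv B s v2 = (- dotyv B s v1)%R.
Proof.
rewrite /dotyv.
apply: (big_ind2 (fun a b => a = - b)%R); first lra.
  by move=> a b c e -> ->; lra.
by move=> i _; rewrite /vcoord !ffunE; lra.
Qed.

Lemma sum_const n (c : R) : \big[Rplus/0%R]_(j < n) c = (INR n * c)%R.
Proof.
elim: n => [|n IH]; first by rewrite big_ord0 /=; lra.
rewrite big_ord_recr /= IH; case: n IH => [|n] _ /=; lra.
Qed.

Lemma dot_v1_v1 : dotyv B v1 v1 = (INR d * B)%R.
Proof.
rewrite /dotyv -sum_const; apply: eq_bigr => i _.
rewrite /ycoord /vcoord !ffunE; lra.
Qed.

Definition sz : sgnvec d := [ffun j : 'I_d => odd j].

Lemma dot_sz : ~~ odd d -> dotyv B sz v1 = 0%R.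
Proof.
move=> ev.
rewrite /dotyv.
have -> : \big[Rplus/0%R]_(j < d) (ycoord B sz j * vcoord v1 j)%R
   = \big[Rplus/0%R]_(j < d) (if odd j then B else - B)%R.
  by apply: eq_bigr => i _; rewrite /ycoord /vcoord !ffunE; case: (odd i); lra.
rewrite -(big_mkord xpredT (fun j => if odd j then B else - B)%R).
have -> : d = (d./2).*2 by rewrite -{1}(odd_double_half d) (negbTE ev).
elim: (d./2) => [|m IH]; first by rewrite big_nil.
rewrite doubleS !big_nat_recr //= IH odd_double /=; lra.
Qed.
End S.

Lemma probV_const d (c : bool) (v : sgnvec d) :
  probV (fun _ => if c then 1%R else (-1)%R) v =
  if v == [ffun _ : 'I_d => c] then 1%R else 0%R.
Proof.
rewrite /probV.
case: eqP => [->|].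
  apply: (big_ind (fun a => a = 1%R)) => //.
    by move=> a b -> ->; lra.
  by move=> i _; rewrite ffunE; case: c; lra.
move=> neq.
have [j Hj] : exists j, v j != c.
  apply/existsP; apply: contraT; rewrite negb_exists => /forallP H.
  by case: neq; apply/ffunP => j; rewrite ffunE; move: (H j); rewrite negbK => /eqP.
rewrite (bigD1 j) //=.
have -> : (if v j then 1 / 2 + (if c then 1 else -1) / 2 else 1 / 2 - (if c then 1 else -1) / 2)%R = 0%R.
  by clear neq; move: Hj; case: (v j); case: c => //= _; lra.
lra.
Qed.

Lemma probM_const d (c : bool) alpha B (s : sgnvec d) :
  probM alpha B (fun _ => if c then 1%R else (-1)%R) s =
  (alpha * (if s \in Tplus B [ffun _ : 'I_d => c] then / INR #|Tplus B [ffun _ : 'I_d => c]| else 0)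
   + (1 - alpha) * (if s \in Tminus B [ffun _ : 'I_d => c] then / INR #|Tminus B [ffun _ : 'I_d => c]| else 0))%R.
Proof.
rewrite /probM (bigD1 [ffun _ : 'I_d => c]) //= probV_const eqxx big1.
  ring.
by move=> v /negbTE ne; rewrite probV_const ne; ring.
Qed.

Theorem mainTheorem15 (d : nat) (eps B : R) :
  (2 <= d)%N -> ~~ odd d -> (0 < eps)%R -> (0 < B)%R ->
  ~ LDP d (exp eps / (exp eps + 1))%R B eps.
Proof.
move=> d2 ev he hB H.
have := H (fun _ => if true then 1%R else (-1)%R) (fun _ => if false then 1%R else (-1)%R).
move=> /(_ _ _ [set v1 d]).
have cube : forall c : bool, in_cube (fun _ : 'I_d => if c then 1%R else (-1)%R).
  by move=> c j; case: c; lra.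
move=> /(_ (cube true) (cube false)).
rewrite /probMset !big_set1.
move: (probM_const d true (exp eps / (exp eps + 1))%R B (v1 d)) (probM_const d false (exp eps / (exp eps + 1))%R B (v1 d)) => /= -> ->.
have hd : (0 < INR d * B)%R.
  apply: Rmult_lt_0_compat => //; apply: lt_0_INR; apply/ltP; by apply: leq_trans d2.
have in1 : v1 d \in Tplus B [ffun _ : 'I_d => true].
  by rewrite inE /inTplus dot_v1_v1; case: Rlt_dec.
have in1' : v1 d \notin Tminus B [ffun _ : 'I_d => true].
  by rewrite inE negbK; move: in1; rewrite inE.
have in2 : v1 d \notin Tplus B [ffun _ : 'I_d => false].
  rewrite inE /inTplus -/(v2 d) dot_v2 dot_v1_v1; case: Rlt_dec => // r; exfalso; lra.
have in2' : v1 d \in Tminus B [ffun _ : 'I_d => false].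
  by rewrite inE; move: in2; rewrite inE.
rewrite in1 (negbTE in1') (negbTE in2) in2'.
have prop : Tplus B [ffun _ : 'I_d => true] \proper Tminus B [ffun _ : 'I_d => false].
  apply/properP; split.
    apply/subsetP => s; rewrite !inE /inTplus -/(v2 d) -/(v1 d) dot_v2.
    by case: Rlt_dec => // h _; case: Rlt_dec => // h2; exfalso; lra.
  exists (sz d); rewrite !inE /inTplus -/(v2 d) -/(v1 d) ?dot_v2 dot_sz //;
    case: Rlt_dec => // r; exfalso; lra.
have ab := proper_card prop.
have a0 : (0 < #|Tplus B [ffun _ : 'I_d => true]|)%N by apply/card_gt0P; exists (v1 d).
have ra0 : (0 < INR #|Tplus B [ffun _ : 'I_d => true]|)%R by apply: lt_0_INR; apply/ltP.
have rab : (INR #|Tplus B [ffun _ : 'I_d => true]| < INR #|Tminus B [ffun _ : 'I_d => false]|)%R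
  by apply: lt_INR; apply/ltP.
have inv := Rinv_lt_contravar _ _ (Rmult_lt_0_compat _ _ ra0 (Rlt_trans _ _ _ ra0 rab)) rab.
set a := INR _ in ra0 rab inv *; set b := INR _ in rab inv *.
have e0 := exp_pos eps; set e := exp eps in e0 *.
have -> : (e * ((e / (e + 1)) * 0 + (1 - e / (e + 1)) * / b) = (e / (e + 1)) * / b)%R
  by field; lra.
have k0 : (0 < e / (e + 1))%R by apply: Rdiv_lt_0_compat; lra.
move=> h; have : (e / (e + 1) * / b < e / (e + 1) * / a)%R by apply: Rmult_lt_compat_l.
lra.
Qed.
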